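(* Let $\Sigma$ be a simplicial homologically smooth tropical fan of dimension $d$. For any integers $k$ and $q$, the sequence \[0\to C^{k,q}_c(\Sigma)\to C^{k,q}(\overline{\Sigma})\to\bigoplus_{\varrho\in\Sigma_1}C^{k,q}(\overline{\Sigma}^\varrho)\to\bigoplus_{\sigma\in\Sigma_2}C^{k,q}(\overline{\Sigma}^\sigma)\to\cdots\to\bigoplus_{\sigma\in\Sigma_{d-k}}C^{k,q}(\overline{\Sigma}^\sigma)\to0\] is exact, where the differentials are signed sums of identity maps: on the summand indexed by a face of $\overline{\Sigma}$, the map $C^{k,q}(\overline{\Sigma}^\sigma)\to C^{k,q}(\overline{\Sigma}^\zeta)$ (for $\sigma\subset\zeta$, $\dim\zeta=\dim\sigma+1$) is $\operatorname{sign}(\sigma,\zeta)$ times the identity of $F^k$ of that face if the face lies in $\overline{\Sigma}^\zeta_\infty$ and zero otherwise, and $C^{k,q}_c(\Sigma)\to C^{k,q}(\overline{\Sigma})$ is the identity onto the summands of faces of sedentarity $\underline0$.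
   Context: A tropical fan of dimension $d$ in $N_\mathbb{R}$ ($N$ a lattice) is a rational fan with all maximal cones of dimension $d$ and nonzero integer weights satisfying the balancing condition; simplicial means each cone $\sigma$ is generated by $\dim\sigma$ rays; homologically smooth means each open subset of the support satisfies tropical Poincaré duality (cap product with the fundamental class is an isomorphism from rational tropical cohomology to tropical Borel–Moore homology in complementary bidegrees). $\overline{\Sigma}$ is the canonical compactification (closure of $|\Sigma|$ in the tropical toric variety of $\Sigma$); its faces are the closures $\square^\tau_\eta$ of the sets $\eta^\tau_\infty$ of points of sedentarity $\tau$ lying over $\eta$, for $\tau\subseteq\eta$ in $\Sigma$; the faces of sedentarity $\underline0$ are the closures of the cones of $\Sigma$. For $\sigma\in\Sigma$, $\overline{\Sigma}^\sigma$ is identified with the closed stratum $\overline{\Sigma}^\sigma_\infty$ whose faces are the $\square^\tau_\eta$ with $\sigma\subseteq\tau\subseteq\eta$. For a face $\gamma$, $F^k(\gamma)$ is the dual of the multi-tangent space $F_k(\gamma)$ (sum of $\bigwedge^k$ of rational lattices of faces of the same sedentarity containing $\gamma$). Cellular cochain groups: $C^{k,q}_c(\Sigma)=\bigoplus_{\sigma\in\Sigma_q}F^k(\sigma)$, $C^{k,q}(\overline{\Sigma}^\sigma)=\bigoplus F^k(\gamma)$ over $q$-dimensional faces $\gamma$ of $\overline{\Sigma}^\sigma_\infty$. $\operatorname{sign}(\sigma,\zeta)\in\{\pm1\}$ are incidence signs determined by fixed orientations of the cones. *)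

(* Defs.v *)
From HB Require Import structures.
From mathcomp Require Import all_boot all_order all_algebra.
From mathcomp Require Import reals.
Set Implicit Arguments. Unset Strict Implicit. Unset Printing Implicit Defensive.
Import Order.TTheory GRing.Theory Num.Theory.
Local Open Scope ring_scope.

(* A simplicial rational fan in N_R = R^n, N = Z^n, is given by a finite     *)
(* type of rays [Rays], integral ray vectors [r], and the set [C] of cones,  *)
(* each simplicial cone being identified with its set of rays.               *)
Section Fans.
Variable n : nat.
Variable Rays : finType.
Variable r : Rays -> 'rV[int]_n.

Definition ratv (u : 'rV[int]_n) : 'rV[rat]_n := map_mx intr u.
Definition realv (R : realType) (u : 'rV[int]_n) : 'rV[R]_n := map_mx intr u.

Definition spanQ (S : {set Rays}) : {vspace 'rV[rat]_n} :=
  <<[seq ratv (r i) | i <- enum S]>>%VS.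

Definition realcone (R : realType) (S : {set Rays}) (v : 'rV[R]_n) : Prop :=
  exists a : Rays -> R, (forall i, 0 <= a i) /\ v = \sum_(i in S) a i *: realv R (r i).

Definition maximal (C : {set {set Rays}}) (S : {set Rays}) : bool :=
  (S \in C) && [forall T in C, (S \subset T) ==> (T == S)].

(* v is the primitive generator of N_sigma / N_tau pointing towards sigma *)
Definition primitive_vec (tau sigma : {set Rays}) (v : 'rV[int]_n) : Prop :=
  [/\ ratv v \in spanQ sigma,
      (forall u : 'rV[int]_n, ratv u \in spanQ sigma ->
          exists m : int, ratv (u - m *: v) \in spanQ tau) &
      (exists c : rat, 0 < c /\
          forall rho, rho \in sigma :\: tau -> ratv v - c *: ratv (r rho) \in spanQ tau)].

Definition balanced (C : {set {set Rays}}) (w : {set Rays} -> int) (d : nat) : Prop :=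
  forall tau, tau \in C -> #|tau|.+1 = d ->
    exists e : {set Rays} -> 'rV[int]_n,
      (forall sigma, sigma \in C -> tau \proper sigma -> #|sigma| = d ->
          primitive_vec tau sigma (e sigma)) /\
      ratv (\sum_(sigma in C | (tau \proper sigma) && (#|sigma| == d)) w sigma *: e sigma)
        \in spanQ tau.

Definition simplicial_tropical_fan (R : realType) (C : {set {set Rays}})
    (w : {set Rays} -> int) (d : nat) : Prop :=
  [/\ set0 \in C,
      (forall S T : {set Rays}, S \in C -> T \subset S -> T \in C),
      (forall i, [set i] \in C),
      (forall S, S \in C -> free [seq ratv (r i) | i <- enum S]) &
      (forall S T : {set Rays}, S \in C -> T \in C -> forall v : 'rV[R]_n,
          realcone S v /\ realcone T v <-> realcone (S :&: T) v)] /\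
  [/\ (forall S, maximal C S -> #|S| = d),
      (forall S, maximal C S -> w S != 0) &
      balanced C w d].

(* Exterior powers of Q^n, in Pluecker coordinates (indexed by subsets).     *)
Definition Ext := {ffun {set 'I_n} -> rat^o}.

Definition wedge (k : nat) (v : 'I_k -> 'rV[rat]_n) : Ext :=
  [ffun I : {set 'I_n} => if #|I| == k then
     \det (\matrix_(i < k, j < k) \sum_(l in I | index l (enum I) == j) (v i) 0 l)
   else 0].

Definition wedgeSpace (k : nat) (W : {vspace 'rV[rat]_n}) : {vspace Ext} :=
  <<[seq wedge (fun i => tnth (vbasis W) (f i)) | f : {ffun 'I_k -> 'I_(\dim W)}]>>%VS.

(* a linear projection Q^n -> Q^n with kernel N_{tau,Q}; it identifies       *)
(* N_Q / N_{tau,Q} with its image                                          *)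
Definition pi_tau (tau : {set Rays}) : 'End('rV[rat]_n) :=
  (\1 - projv (spanQ tau))%VF.

Variable C : {set {set Rays}}.
Variable k : nat.

(* multi-tangent space F_k of the face \square^tau_eta of \overline\Sigma:   *)
Definition Fk (tau eta : {set Rays}) : {vspace Ext} :=
  (\sum_(eta' in C | eta \subset eta') wedgeSpace k (pi_tau tau @: spanQ eta'))%VS.

Definition Fd (tau eta : {set Rays}) := 'Hom(subvs_of (Fk tau eta), rat^o).

(* incidence sign for sigma a facet of zeta, with orientations of the cones *)
(* given by the order of the rays times the sign (-1)^(eps sigma)           *)
Definition sgn (eps : {set Rays} -> bool) (sigma zeta : {set Rays}) : rat :=
  (-1) ^+ (eps sigma (+) eps zeta (+)
     odd #|[set x in sigma | [exists y in zeta :\: sigma,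
                                 (enum_rank x < enum_rank y)%N]]|).

(* cochains: C_c^{k,q}(Sigma) = \oplus_{eta in Sigma_q} F^k(eta)            *)
Definition Cc := forall eta : {set Rays}, Fd set0 eta.
Definition in_Cc (q : nat) (y : Cc) : Prop :=
  forall eta, ~~ ((eta \in C) && (#|eta| == q)) -> y eta = 0.

(* \oplus_{sigma in Sigma_j} C^{k,q}(\overline\Sigma^sigma), the summand   *)
(* (sigma, tau, eta) being F^k(\square^tau_eta), sigma <= tau <= eta        *)
Definition Tc := forall sigma tau eta : {set Rays}, Fd tau eta.
Definition in_T (j q : nat) (x : Tc) : Prop :=
  forall sigma tau eta : {set Rays},
    ~~ [&& sigma \in C, #|sigma| == j, sigma \subset tau, tau \subset eta,
           eta \in C & #|eta| == (#|tau| + q)%N] ->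
    x sigma tau eta = 0.

(* C_c^{k,q}(Sigma) -> C^{k,q}(\overline\Sigma): identity onto sedentarity 0 *)
Definition dc (y : Cc) : Tc :=
  fun sigma tau eta =>
    match eqVneq tau set0 with
    | EqNotNeq e =>
        if sigma == set0 then eq_rect set0 (fun t => Fd t eta) (y eta) tau (esym e)
        else 0
    | NeqNotEq _ => 0
    end.

Definition dT (eps : {set Rays} -> bool) (x : Tc) : Tc :=
  fun zeta tau eta =>
    if (zeta \in C) && (zeta \subset tau) then
      \sum_(sigma in C | (sigma \subset zeta) && (#|sigma|.+1 == #|zeta|))
         sgn eps sigma zeta *: x sigma tau eta
    else 0.

End Fans.

(* Main.v *)
Require Import Defs.
From HB Require Import structures.
From mathcomp Require Import all_boot all_order all_algebra.
From mathcomp Require Import reals ring zify.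
Set Implicit Arguments. Unset Strict Implicit. Unset Printing Implicit Defensive.
Import Order.TTheory GRing.Theory Num.Theory.
Local Open Scope ring_scope.

Section Signs.
Variable Rays : finType.
Implicit Types S T : {set Rays}.

Definition cnt S (y : Rays) := #|[set x in S | (enum_rank x < enum_rank y)%N]|.

Lemma sgn1 eps S y : y \notin S ->
  sgn eps S (y |: S) = (-1) ^+ (eps S (+) eps (y |: S) (+) odd (cnt S y)).
Proof.
move=> yS; rewrite /sgn /cnt; congr ((-1) ^+ (_ (+) _ (+) odd _)).
apply: eq_card => x; rewrite !inE; congr (_ && _).
apply/existsP/idP => [[z]|h].
  rewrite !inE => /andP[/andP[zS zy] lt].
  by move: zy; rewrite (negbTE zS) orbF => /eqP <-.
by exists y; rewrite !inE eqxx yS.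
Qed.

Lemma card_sep S (P : pred Rays) : #|[set x in S | P x]| = (\sum_(x in S) P x)%N.
Proof.
rewrite -sum1_card big_mkcond [RHS]big_mkcond /=; apply: eq_bigr => x _; rewrite !inE.
by case: (x \in S); case: (P x).
Qed.

Lemma cntU y' S y : y' \notin S ->
  cnt (y' |: S) y = ((enum_rank y' < enum_rank y)%N + cnt S y)%N.
Proof. by move=> yS; rewrite /cnt !card_sep big_setU1. Qed.

Lemma sq eps S a b : a != b -> a \notin S -> b \notin S ->
  sgn eps S (a |: S) * sgn eps (a |: S) (b |: (a |: S)) =
  - (sgn eps S (b |: S) * sgn eps (b |: S) (a |: (b |: S))).
Proof.
move=> ab aS bS.
have baS : b \notin a |: S by rewrite !inE negb_or eq_sym ab.
have abS : a \notin b |: S by rewrite !inE negb_or ab.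
rewrite !sgn1 // !cntU // (setUCA [set b]) .
have rk : (enum_rank b < enum_rank a)%N = ~~ (enum_rank a < enum_rank b)%N.
  have ne : (enum_rank a : nat) != enum_rank b.
    by apply: contra ab => /eqP/val_inj h; apply/eqP; rewrite -(enum_rankK a) h enum_rankK.
  by rewrite ltnNge leq_eqVlt (negbTE ne).
rewrite rk !oddD !oddb !signr_addb signrN.
case: (eps (a |: S)); case: (eps (b |: S)); rewrite /= ?expr0 ?expr1; ring.
Qed.
End Signs.
Section Facets.
Variable Rays : finType.
Variable C : {set {set Rays}}.
Hypothesis Hcl : forall S T : {set Rays}, S \in C -> T \subset S -> T \in C.

Lemma facets (V : nmodType) (F : {set Rays} -> V) z : z \in C ->
  \sum_(s in C | (s \subset z) && (#|s|.+1 == #|z|)) F s = \sum_(b in z) F (z :\ b).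
Proof.
move=> zC.
have inj : {in z &, injective (fun b => z :\ b)}.
  move=> b c bz cz /setP /(_ c); rewrite !inE eqxx cz andbT /=.
  by case: eqP => // ->.
rewrite -(big_imset F inj) /=.
apply: eq_bigl => s; apply/idP/imsetP => [/andP[sC /andP[sz /eqP hc]]|[b bz ->]].
  have : #|z :\: s| == 1%N.
    by rewrite cardsD (setIidPr sz) -hc subSnn.
  move/cards1P => [b hb].
  have bzs : b \in z :\: s by rewrite hb set11.
  exists b; first by move: bzs; rewrite inE => /andP[].
  apply/setP => x; rewrite !inE; apply/idP/idP => [xs|/andP[xb xz]].
    rewrite (subsetP sz) // andbT; apply: contraTneq xs => ->.
    by move: bzs; rewrite inE => /andP[].
  have : x \notin z :\: s by rewrite hb inE.
  by rewrite inE xz andbT negbK.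
rewrite (Hcl zC (subsetDl _ _)) subsetDl /=.
by rewrite (cardsD1 b z) bz.
Qed.
End Facets.
Section Vanish.
Variable n : nat.
Variable Rays : finType.
Variable r : Rays -> 'rV[int]_n.
Variable C : {set {set Rays}}.
Variable k d : nat.
Hypothesis Hcl : forall S T : {set Rays}, S \in C -> T \subset S -> T \in C.
Hypothesis Hfree : forall S, S \in C -> free [seq ratv (r i) | i <- enum S].
Hypothesis Hmax : forall S, maximal C S -> #|S| = d.

Lemma Fd0 tau eta (f : Fd r C k tau eta) : Fk r C k tau eta = 0%VS -> f = 0.
Proof.
move=> H; apply/lfunP => u.
have -> : u = 0.
  apply: val_inj => /=. have : vsval u \in (0%VS : {vspace Ext n}) by rewrite -H subvsP.
  rewrite memv0 => /eqP ->.
  by [].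
by rewrite linear0 zero_lfunE.
Qed.

Lemma card_le_d S : S \in C -> (#|S| <= d)%N.
Proof.
move=> SC.
case: (@arg_maxnP _ S (fun T => (T \in C) && (S \subset T)) (fun T => #|T|)).
  by rewrite SC subxx.
move=> M /andP[MC SM] Mmax.
rewrite -(Hmax (S := M)); first exact: subset_leq_card.
rewrite /maximal MC; apply/forallP => T; apply/implyP => TC; apply/implyP => MT.
rewrite eq_sym eqEcard MT /=; apply: Mmax.
by rewrite TC (subset_trans SM MT).
Qed.

Lemma dim_img tau eta : tau \in C -> eta \in C -> tau \subset eta ->
  (\dim (pi_tau r tau @: spanQ r eta) + #|tau| <= #|eta|)%N.
Proof.
move=> tC eC te.
have := limg_ker_dim (pi_tau r tau) (spanQ r eta).
have h1 : (\dim (spanQ r eta) <= #|eta|)%N.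
  by have := dim_span [seq ratv (r i) | i <- enum eta]; rewrite size_map -cardE.
have h2 : \dim (spanQ r tau) = #|tau|.
  by rewrite /spanQ (eqP (Hfree tC)) size_map -cardE.
have h3 : (\dim (spanQ r tau) <= \dim (spanQ r eta :&: lker (pi_tau r tau)))%N.
  apply: dimvS; rewrite subv_cap; apply/andP; split.
    apply: sub_span => v /mapP[i]; rewrite mem_enum => itau ->.
    by apply/mapP; exists i; rewrite ?mem_enum ?(subsetP te).
  apply/subvP => v vT; rewrite memv_ker /pi_tau.
  by rewrite add_lfunE opp_lfunE id_lfunE projv_id // subrr.
move=> h4; rewrite -h2; apply: leq_trans h1; rewrite -h4 addnC leq_add2r; exact: h3.
Qed.

Lemma wedge0 (W : {vspace 'rV[rat]_n}) : (\dim W < k)%N -> wedgeSpace k W = 0%VS.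
Proof.
move=> dk; apply/eqP; rewrite -subv0; apply/span_subvP => v /mapP[f _ ->].
rewrite memv0; apply/eqP/ffunP => I; rewrite !ffunE.
case: ifP => // _.
case: (boolP [exists i1, exists i2, (i1 != i2) && (f i1 == f i2)]);
    last first.
  move=> H.
  have inj : injective f.
    move=> i1 i2 e; case: (eqVneq i1 i2) => [//|ne]; exfalso; apply: (negP H).
    by apply/existsP; exists i1; apply/existsP; exists i2; rewrite ne e eqxx.
  by have := @leq_card _ _ f inj; rewrite !card_ord; lia.
move=> /existsP[i1 /existsP[i2 /andP[ne e]]].
by rewrite (determinant_alternate ne) // => j; rewrite !mxE (eqP e).
Qed.

Lemma Fk0 tau eta : tau \in C -> eta \in C -> tau \subset eta -> (d < #|tau| + k)%N ->
  Fk r C k tau eta = 0%VS.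
Proof.
move=> tC eC te hd; rewrite /Fk big1 // => e' /andP[e'C sub].
apply: wedge0.
have a := dim_img tC e'C (subset_trans te sub).
have b := card_le_d e'C.
rewrite -(ltn_add2r #|tau|); apply: leq_ltn_trans a _; apply: leq_ltn_trans b _.
by rewrite addnC.
Qed.
End Vanish.

Section Main.
Variable n : nat.
Variable Rays : finType.
Variable r : Rays -> 'rV[int]_n.
Variable C : {set {set Rays}}.
Variable k d q : nat.
Variable eps : {set Rays} -> bool.
Hypothesis Hcl : forall S T : {set Rays}, S \in C -> T \subset S -> T \in C.
Hypothesis Hfree : forall S, S \in C -> free [seq ratv (r i) | i <- enum S].
Hypothesis Hmax : forall S, maximal C S -> #|S| = d.

Lemma sgnK S T : sgn eps S T * sgn eps S T = 1.
Proof. by rewrite /sgn -expr2 sqrr_sign. Qed.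

Lemma sgn_scale0 S T (V : lmodType rat) (v : V) : sgn eps S T *: v = 0 -> v = 0.
Proof. by move=> h; rewrite -[v]scale1r -(sgnK S T) -scalerA h scaler0. Qed.

Lemma dc_set0 (y : Cc r C k) sigma eta :
  dc y sigma set0 eta = if sigma == set0 then y eta else 0.
Proof.
rewrite /dc; case: eqVneq => [e|]; last by move/eqP.
by rewrite (eq_irrelevance e erefl).
Qed.

Lemma dc_ne (y : Cc r C k) sigma tau eta : tau != set0 -> dc y sigma tau eta = 0.
Proof.
move=> ne; rewrite /dc; case: eqVneq => // e; exfalso.
by rewrite e eqxx in ne.
Qed.


Lemma antisym (V : lmodType rat) (I : finType) (A : pred I) (G : I -> I -> V) :
  (forall b c, b \in A -> c \in A -> G c b = - G b c) ->
  \sum_(b in A) \sum_(c in A) G b c = 0.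
Proof.
move=> H.
have h : \sum_(b in A) \sum_(c in A) G b c = - \sum_(b in A) \sum_(c in A) G b c.
  rewrite [LHS]exchange_big /= -sumrN; apply: eq_bigr => x xA.
  rewrite -sumrN; apply: eq_bigr => y yA.
exact: H.
set S := \sum_(b in A) _ in h *.
have : (2%:R : rat) *: S = 0 by rewrite scaler_nat mulr2n {1}h addNr.
by move/eqP; rewrite scaler_eq0 => /orP[//|/eqP].
Qed.

Lemma sq2 (Z : {set Rays}) (b c : Rays) : b \in Z -> c \in Z -> b != c ->
  sgn eps (Z :\ b :\ c) (Z :\ b) * sgn eps (Z :\ b) Z =
  - (sgn eps (Z :\ c :\ b) (Z :\ c) * sgn eps (Z :\ c) Z).
Proof.
move=> bZ cZ bc.
have cZb : c \in Z :\ b by rewrite !inE eq_sym bc cZ.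
have bZc : b \in Z :\ c by rewrite !inE bc bZ.
have comm : Z :\ c :\ b = Z :\ b :\ c by rewrite !setDDl setUC.
have h1 : c != b by rewrite eq_sym.
have h2 : c \notin Z :\ b :\ c by rewrite !inE eqxx.
have h3 : b \notin Z :\ b :\ c by rewrite !inE eqxx andbF.
have := sq eps h1 h2 h3.
rewrite (setD1K cZb) (setD1K bZ).
have e3 : b |: (Z :\ b :\ c) = Z :\ c by rewrite -comm setD1K.
by rewrite e3 (setD1K cZ) comm.
Qed.

Lemma sq3 (s : {set Rays}) (a b : Rays) : b \in s -> a \notin s ->
  sgn eps (s :\ b) s * sgn eps (s :\ b) (a |: (s :\ b)) =
  - sgn eps s (a |: s) * sgn eps (a |: (s :\ b)) (a |: s).
Proof.
move=> bs aS.
have ba : b != a by apply: contraNneq aS => <-.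
have bS : b \notin s :\ b by rewrite !inE eqxx.
have aS' : a \notin s :\ b by rewrite !inE negb_and aS orbT.
have h := sq eps ba bS aS'.
rewrite (setD1K bs) setUCA (setD1K bs) in h.
set c1 := sgn eps (s :\ b) s in h *.
set c2 := sgn eps s (a |: s) in h *.
set c3 := sgn eps (s :\ b) (a |: (s :\ b)) in h *.
set c4 := sgn eps (a |: (s :\ b)) (a |: s) in h *.
have s2 : c2 * c2 = 1 by exact: sgnK.
have s3 : c3 * c3 = 1 by exact: sgnK.
have -> : c1 = - (c3 * c4) * c2 by rewrite -h -mulrA s2 mulr1.
transitivity (- (c3 * c3) * (c2 * c4)); first ring.
by rewrite s3; ring.
Qed.

Lemma cl1 (y : Cc r C k) zeta tau eta : dT eps (dc y) zeta tau eta = 0.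
Proof.
rewrite /dT; case: ifP => // /andP[zC zt].
apply: big1 => s /andP[sC /andP[sz /eqP hc]].
case: (eqVneq tau set0) => [te|tne]; last by rewrite dc_ne ?scaler0.
exfalso; move: zt; rewrite te subset0 => /eqP ze.
by rewrite ze cards0 in hc.
Qed.

Lemma cl2 (y : Tc r C k) zeta tau eta : dT eps (dT eps y) zeta tau eta = 0.
Proof.
rewrite {1}/dT; case: ifP => // /andP[zC zt].
rewrite (facets Hcl _ zC).
pose G b c := if c != b then (sgn eps (zeta :\ b :\ c) (zeta :\ b) *
   sgn eps (zeta :\ b) zeta) *: y (zeta :\ b :\ c) tau eta else 0.
transitivity (\sum_(b in zeta) \sum_(c in zeta) G b c); last first.
  apply: antisym => b c bz cz; rewrite /G.
  case: (eqVneq b c) => [->|bc] /=; first by rewrite oppr0.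
  rewrite (sq2 bz cz bc) scaleNr opprK.
  by congr (_ *: y _ tau eta); rewrite !setDDl setUC.
apply: eq_bigr => b bz.
have bC : zeta :\ b \in C := Hcl zC (subsetDl _ _).
have bt : zeta :\ b \subset tau := subset_trans (subsetDl _ _) zt.
rewrite /dT bC bt /= (facets Hcl _ bC) scaler_sumr.
rewrite (big_setD1 b bz) /= /G eqxx add0r.
apply: eq_bigr => c; rewrite !inE => /andP[cb _].
by rewrite cb scalerA mulrC.
Qed.

Lemma cl4 (x : Tc r C k) : in_T 0 q x ->
  ((0 < d - k)%N -> forall zeta tau eta, dT eps x zeta tau eta = 0) ->
  forall sigma tau eta, x sigma tau eta = dc (fun eta => x set0 set0 eta) sigma tau eta.
Proof.
move=> hx hd sigma tau eta.
case: (eqVneq tau set0) => [->|tne].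
  rewrite dc_set0; case: eqP => [->//|sne].
  apply: hx; apply/negP => /and5P[_ _ st _ /andP[_ _]]; apply: sne.
  by move: st; rewrite subset0 => /eqP.
rewrite dc_ne //.
case: (boolP [&& sigma \in C, #|sigma| == 0%N, sigma \subset tau, tau \subset eta,
   eta \in C & #|eta| == (#|tau| + q)%N]) => [/and5P[sC /eqP s0 st te /andP[eC ce]]|hn];
  last exact: hx.
have tC := Hcl eC te.
case: (ltnP d (#|tau| + k)) => [big|small].
  by apply: Fd0; apply: Fk0 big.
have t0 : (0 < #|tau|)%N by rewrite card_gt0.
have dk : (0 < d - k)%N by lia.
have /set0Pn[a ain] := tne.
have aC : [set a] \in C by apply: Hcl tC _; rewrite sub1set.
have := hd dk [set a] tau eta.
rewrite /dT aC sub1set ain /= (facets Hcl _ aC) big_set1 setDv (cards0_eq s0).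
exact: sgn_scale0.
Qed.

Lemma cl5 j (x : Tc r C k) : (0 < j <= d - k)%N -> in_T j q x ->
  ((j < d - k)%N -> forall zeta tau eta, dT eps x zeta tau eta = 0) ->
  exists y : Tc r C k, in_T j.-1 q y /\
    forall sigma tau eta, x sigma tau eta = dT eps y sigma tau eta.
Proof.
move=> /andP[j0 jd] hx hcoc.
pose y : Tc r C k := fun s tau eta => if [pick a in tau] is Some a then
  (if (a \notin s) && (s \subset tau) then sgn eps s (a |: s) *: x (a |: s) tau eta
   else 0) else 0.
have hy : in_T j.-1 q y.
  move=> s tau eta hn; rewrite /y; case: pickP => [a ain|_] //.
  case: ifP => [/andP[aS st]|] //.
  rewrite hx ?scaler0 //; apply: contra hn => /and5P[aC ca ast te /andP[eC ce]].
  rewrite (Hcl aC (subsetUr _ _)) (subset_trans (subsetUr _ _) ast) te eC ce /= andbT.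
  by rewrite cardsU1 aS add1n in ca; rewrite -(eqP ca).
exists y; split => // s tau eta.
case: (boolP [&& s \in C, #|s| == j, s \subset tau, tau \subset eta, eta \in C
   & #|eta| == (#|tau| + q)%N]) => [/and5P[sC /eqP sj st te /andP[eC ce]]|hn]; last first.
  rewrite hx // /dT; case: ifP => // /andP[sC' st'].
  symmetry; apply: big1 => s' /andP[s'C /andP[s's /eqP hc]].
  rewrite hy ?scaler0 //; apply: contra hn => /and5P[_ c' _ te /andP[eC ce]].
  by rewrite sC' st' te eC ce /= andbT -hc (eqP c') prednK.
have tC := Hcl eC te.
case: (ltnP d (#|tau| + k)) => [big|small].
  have F0 : Fk r C k tau eta = 0%VS by apply: Fk0 big.
  by rewrite (Fd0 (x s tau eta) F0) (Fd0 (dT eps y s tau eta) F0).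
have tne : tau != set0.
  have : s != set0 by rewrite -card_gt0 sj.
  case/set0Pn => b bs; apply/set0Pn; exists b; exact: (subsetP st).
have [a ha ain] : exists2 a, [pick a in tau] = Some a & a \in tau.
  case: pickP => [a ain|none]; first by exists a.
  by have /set0Pn[b bt] := tne; rewrite none in bt.
have yE : forall s', y s' tau eta = if (a \notin s') && (s' \subset tau) then
   sgn eps s' (a |: s') *: x (a |: s') tau eta else 0.
  by move=> s'; rewrite /y ha.
rewrite /dT sC st /= (facets Hcl _ sC).
under eq_bigr => b _ do rewrite yE.
case: (boolP (a \in s)) => [aS|aS].
  rewrite (big_setD1 a aS) /= !inE eqxx /= (subset_trans (subsetDl _ _) st).
  rewrite (setD1K aS) scalerA sgnK scale1r big1 ?addr0 // => b.
  by rewrite !inE => /andP[ba bs]; rewrite (eq_sym a b) ba aS /= scaler0.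
have ast : a |: s \subset tau by rewrite subUset sub1set ain st.
have jlt : (j < d - k)%N.
  have : (#|a |: s| <= #|tau|)%N by apply: subset_leq_card.
  rewrite cardsU1 aS sj => h; lia.
have asC : a |: s \in C := Hcl tC ast.
have := hcoc jlt (a |: s) tau eta.
rewrite /dT asC ast /= (facets Hcl _ asC) big_setU1 //= (setU1K aS).
set c := sgn eps s (a |: s).
set T := \sum_(b in s) _.
move/eqP; rewrite addr_eq0 => /eqP h.
have -> : x s tau eta = - c *: T.
  by rewrite -[x s tau eta]scale1r -(sgnK s (a |: s)) -scalerA h scaleNr scalerN.
rewrite /T scaler_sumr; apply: eq_bigr => b bs.
have ba : b != a by apply: contraNneq aS => <-.
have aSb : a \notin s :\ b by rewrite !inE negb_and aS orbT.
rewrite aSb (subset_trans (subsetDl _ _) st) /=.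
have eU : (a |: s) :\ b = a |: (s :\ b).
  apply/setP => z; rewrite !inE; case: (eqVneq z a) => [->|za] /=; last by [].
  by rewrite eq_sym ba.
by rewrite eU !scalerA (sq3 bs aS) !mulNr.
Qed.

End Main.

Theorem proposition3p4 (R : realType) (n d : nat) (Rays : finType)
    (r : Rays -> 'rV[int]_n) (C : {set {set Rays}}) (w : {set Rays} -> int)
    (eps : {set Rays} -> bool) (k q : nat) :
  simplicial_tropical_fan r R C w d ->
  [/\ (* the composite C_c -> C(\overline\Sigma) -> \oplus_{Sigma_1} vanishes *)
      (forall y : Cc r C k, in_Cc q y -> (0 < d - k)%N ->
         forall zeta tau eta, dT eps (dc y) zeta tau eta = 0),
      (* consecutive differentials compose to zero *)
      (forall (j : nat) (y : Tc r C k), (j.+2 <= d - k)%N -> in_T j q y ->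
         forall zeta tau eta, dT eps (dT eps y) zeta tau eta = 0),
      (* injectivity of C_c -> C(\overline\Sigma) *)
      (forall y : Cc r C k, in_Cc q y ->
         (forall sigma tau eta, dc y sigma tau eta = 0) -> forall eta, y eta = 0),
      (* exactness at C(\overline\Sigma) *)
      (forall x : Tc r C k, in_T 0 q x ->
         ((0 < d - k)%N -> forall zeta tau eta, dT eps x zeta tau eta = 0) ->
         exists y : Cc r C k, in_Cc q y /\
           forall sigma tau eta, x sigma tau eta = dc y sigma tau eta) &
      (* exactness at \oplus_{sigma in Sigma_j} C(\overline\Sigma^sigma), 1 <= j <= d-k *)
      (forall (j : nat) (x : Tc r C k), (0 < j <= d - k)%N -> in_T j q x ->
         ((j < d - k)%N -> forall zeta tau eta, dT eps x zeta tau eta = 0) ->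
         exists y : Tc r C k, in_T j.-1 q y /\
           forall sigma tau eta, x sigma tau eta = dT eps y sigma tau eta)].
Proof.
move=> [[H0 Hcl Hsing Hfree Hcone] [Hmax Hw Hbal]].
split.
- by move=> y _ _ zeta tau eta; apply: cl1.
- by move=> j y _ _ zeta tau eta; apply: cl2.
- move=> y _ H eta; have := H set0 set0 eta.
  by rewrite dc_set0 eqxx.
- move=> x hx hd; exists (fun eta => x set0 set0 eta); split.
    move=> eta h; apply: hx; apply: contra h.
    by move=> /and5P[_ _ _ _ /andP[eC ce]]; rewrite eC -(add0n q) -(cards0 Rays).
  by move=> sigma tau eta; apply: (cl4 Hcl Hfree Hmax hx hd).
- move=> j x hj hx hc; exact: (cl5 Hcl Hfree Hmax hj hx hc).
Qed.
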